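(* Let $s\ge 1$, let $\boldsymbol\xi=(\xi_1,\dots,\xi_\ell)$ consist of representatives of pairwise distinct nontrivial conjugacy classes of $\mathbb{F}_{q^m}$, let $\mathbf n=(n_1,\dots,n_\ell)$ be a length partition of $n$, and let $\boldsymbol\beta_1,\dots,\boldsymbol\beta_s\in\mathbb{F}_{q^m}^n$ be such that every block $\boldsymbol\beta_j^{(i)}\in\mathbb{F}_{q^m}^{n_i}$ has $\mathbb{F}_q$-linearly independent entries. Let $\mathbf c=(\mathbf c_1\mid\dots\mid\mathbf c_s)$ be a codeword of the HILRS code with these parameters and dimension $sk$, with message-polynomial vector $(f_1,\dots,f_s)$, i.e. $f_j\in\mathbb{F}_{q^m}[x;\theta,\delta]_{<k}$ and $\mathbf c_j=f_j(\boldsymbol\beta_j)_{\boldsymbol\xi}$ for all $j$. Let $\mathbf y=\mathbf c+\mathbf e\in\mathbb{F}_{q^m}^{sn}$, where $\mathbf e=(\mathbf e_1\mid\dots\mid\mathbf e_s)$ has sum-rank weight $t$ (with respect to the block-ordered partition), and let $\sigma\in\mathbb{F}_{q^m}[x;\theta,\delta]$ be the error-span polynomial of $\mathbf e$. For $j=1,\dots,s$ let $G_j$ be the minimal skew polynomial of $\boldsymbol\beta_j$ with respect to $\boldsymbol\xi$, and let $R_j$ be the interpolation polynomial with $\deg R_j<n$ and $R_j(\boldsymbol\beta_j)_{\boldsymbol\xi}=\mathbf y_j$. Then $$\sigma\cdot R_j\equiv \sigma\cdot f_j \bmod_r G_j\qquad\text{for all } j=1,\dots,s.$$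
   Context: Let $q$ be a prime power, $m\ge 1$, and $\theta$ an automorphism of $\mathbb{F}_{q^m}$ with fixed field $\mathbb{F}_q$. Let $\delta:\mathbb{F}_{q^m}\to\mathbb{F}_{q^m}$ be a $\theta$-derivation, i.e. $\delta(a+b)=\delta(a)+\delta(b)$ and $\delta(ab)=\delta(a)b+\theta(a)\delta(b)$. Elements $a,b\in\mathbb{F}_{q^m}$ are conjugate if $b=\theta(c)ac^{-1}+\delta(c)c^{-1}$ for some $c\ne0$; the conjugacy class of $0$ is called trivial. The skew polynomial ring $\mathbb{F}_{q^m}[x;\theta,\delta]$ consists of polynomials $\sum_i f_ix^{i-1}$ ($f_i\in\mathbb{F}_{q^m}$, finitely many nonzero) with ordinary addition and multiplication determined by $xa=\theta(a)x+\delta(a)$; $\mathbb{F}_{q^m}[x;\theta,\delta]_{<k}$ is the set of those of degree $<k$. For $g\neq 0$, $f\bmod_r g$ denotes the unique $r$ with $\deg r<\deg g$ and $f=Qg+r$ for some $Q$ (right division), and $f\equiv h\bmod_r g$ means $f\bmod_r g=h\bmod_r g$. For $a,b\in\mathbb{F}_{q^m}$ set $\mathcal D_a(b):=\theta(b)a+\delta(b)$, $\mathcal D_a^0(b)=b$, $\mathcal D_a^i(b)=\mathcal D_a(\mathcal D_a^{i-1}(b))$. The generalized operator evaluation of $f=\sum_{i=1}^d f_ix^{i-1}$ at $b$ with respect to $a$ is $f(b)_a:=\sum_{i=1}^d f_i\mathcal D_a^{i-1}(b)$. A length partition of $n$ is $\mathbf n=(n_1,\dots,n_\ell)$ of positive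 integers with sum $n$; a vector $\mathbf x\in\mathbb{F}_{q^m}^n$ is written in blocks $\mathbf x=(\mathbf x^{(1)}\mid\dots\mid\mathbf x^{(\ell)})$, $\mathbf x^{(i)}\in\mathbb{F}_{q^m}^{n_i}$, and for $\mathbf a=(a_1,\dots,a_\ell)$ one writes $f(\mathbf x)_{\mathbf a}:=(f(\mathbf x^{(1)})_{a_1}\mid\dots\mid f(\mathbf x^{(\ell)})_{a_\ell})$ (entrywise evaluation in each block). The LRS code $\mathrm{LRS}[\boldsymbol\beta,\boldsymbol\xi;\mathbf n,k]$ is $\{f(\boldsymbol\beta)_{\boldsymbol\xi}: f\in\mathbb{F}_{q^m}[x;\theta,\delta]_{<k}\}$; the HILRS code of interleaving order $s$ with code locators $(\boldsymbol\beta_1\mid\dots\mid\boldsymbol\beta_s)$ and dimension $sk$ is $\{(\mathbf c_1\mid\dots\mid\mathbf c_s)\in\mathbb{F}_{q^m}^{sn}:\mathbf c_j\in\mathrm{LRS}[\boldsymbol\beta_j,\boldsymbol\xi;\mathbf n,k]\ \forall j\}$. For $\mathbf x=(\mathbf x_1\mid\dots\mid\mathbf x_s)\in\mathbb{F}_{q^m}^{sn}$ with each $\mathbf x_j$ split in blocks according to $\mathbf n$, its sum-rank weight (block-ordered partition) is $\mathrm{wt}_{\Sigma R}(\mathbf x)=\sum_{i=1}^\ell\mathrm{rk}_q(\mathbf x_1^{(i)}\mid\dots\mid\mathbf x_s^{(i)})$, where $\mathrm{rk}_q$ is the maximal number of $\mathbb{F}_q$-linearly independent entries. Error decomposition: if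 $t_i=\mathrm{rk}_q(\mathbf e_1^{(i)}\mid\dots\mid\mathbf e_s^{(i)})$, there are $\mathbf a^{(i)}\in\mathbb{F}_{q^m}^{t_i}$ with $\mathbb{F}_q$-linearly independent entries and $\mathbf B_j^{(i)}\in\mathbb{F}_q^{t_i\times n_i}$ with $\mathrm{rk}(\mathbf B_1^{(i)}\mid\dots\mid\mathbf B_s^{(i)})=t_i$ and $\mathbf e_j^{(i)}=\mathbf a^{(i)}\mathbf B_j^{(i)}$ for all $i,j$; the entries of $\mathbf a^{(i)}$ are the error values. The error-span polynomial $\sigma$ is the monic nonzero skew polynomial of least degree with $\sigma(\mathbf a^{(i)})_{\xi_i}=\mathbf 0$ for all $i=1,\dots,\ell$. The minimal skew polynomial of $\boldsymbol\beta_j$ with respect to $\boldsymbol\xi$ is the monic nonzero skew polynomial $G_j$ of least degree with $G_j(\boldsymbol\beta_j^{(i)})_{\xi_i}=\mathbf 0$ for all $i$. *)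

(* Defs.v *)
From HB Require Import structures.
From mathcomp Require Import all_boot all_order all_algebra all_field.
Set Implicit Arguments. Unset Strict Implicit. Unset Printing Implicit Defensive.
Import Order.TTheory GRing.Theory.
Local Open Scope ring_scope.

Section Skew.
Variables (F : finFieldType) (theta : {rmorphism F -> F}) (delta : F -> F).

(* A skew polynomial sum_i f_i x^i is represented by its coefficient list,
   stored in {poly F}; only the additive structure and size/lead_coef/monic
   of {poly F} are used. *)

(* left multiplication by x:  x * (sum g_k x^k) = sum theta(g_k) x^{k+1} + delta(g_k) x^k *)
Definition skew_mulX (g : {poly F}) : {poly F} :=
  map_poly theta g * 'X + \poly_(k < size g) delta g`_k.

Definition smul (f g : {poly F}) : {poly F} :=
  \sum_(i < size f) f`_i *: iter i skew_mulX g.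

Definition is_rrem (f g r : {poly F}) : Prop :=
  (size r < size g)%N /\ exists Q, f = smul Q g + r.

Definition congr_r (f h g : {poly F}) : Prop :=
  exists r, is_rrem f g r /\ is_rrem h g r.

Definition Dop (a b : F) : F := theta b * a + delta b.

Definition opeval (f : {poly F}) (a b : F) : F :=
  \sum_(i < size f) f`_i * iter i (Dop a) b.

Definition skew_conj (a b : F) : Prop :=
  exists c : F, c != 0 /\ b = theta c * a / c + delta c / c.

(* F_q = fixed field of theta.  Linear independence over F_q of the entries
   of v indexed by S. *)
Definition fq_indep (T : finType) (v : T -> F) (S : {set T}) : bool :=
  [forall lam : {ffun T -> F},
     ([forall k, theta (lam k) == lam k] && (\sum_(k in S) lam k * v k == 0))
     ==> [forall k in S, lam k == 0]].

Definition rkq (T : finType) (v : T -> F) : nat :=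
  \max_(S : {set T} | fq_indep v S) #|S|.

Definition bev (l : nat) (nn : 'I_l -> nat) (xi : 'I_l -> F)
  (f : {poly F}) (beta : forall i : 'I_l, 'rV[F]_(nn i)) :
  forall i : 'I_l, 'rV[F]_(nn i) :=
  fun i => \row_k opeval f (xi i) (beta i ord0 k).

Definition sumrank_wt (s l : nat) (nn : 'I_l -> nat)
  (x : 'I_s -> forall i : 'I_l, 'rV[F]_(nn i)) : nat :=
  \sum_(i < l) rkq (fun p : 'I_s * 'I_(nn i) => x p.1 i ord0 p.2).

Definition minimal_monic (P : {poly F} -> Prop) (g : {poly F}) : Prop :=
  g \is monic /\ P g /\ forall h : {poly F}, h != 0 -> P h -> (size g <= size h)%N.

End Skew.

(* Main.v *)
Require Import Defs.
From HB Require Import structures.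
From mathcomp Require Import all_boot all_order all_algebra all_fingroup all_solvable all_field ring.
Import GRing.Theory FinRing.Theory.
Local Open Scope ring_scope.

Lemma cardF0 (F : finFieldType) : (#|F|%:R : F) = 0.
Proof. by apply/eqP; rewrite -zmodXgE -order_dvdn -cardsT order_dvdG ?inE. Qed.

Section S.
Context {F : finFieldType} {theta : {rmorphism F -> F}} {delta : F -> F}.
Hypothesis dD : forall u v : F, delta (u + v) = delta u + delta v.
Hypothesis dM : forall u v : F, delta (u * v) = delta u * v + theta u * delta v.

Local Notation X := (skew_mulX theta delta).
Local Notation ev := (opeval theta delta).
Local Notation D := (Dop theta delta).
Local Notation sm := (smul theta delta).

Lemma delta0 : delta 0 = 0.
Proof. have h := dD 0 0; rewrite addr0 in h.
by apply: (addrI (delta 0)); rewrite -h addr0. Qed.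

Lemma deltaN u : delta (- u) = - delta u.
Proof. have h := dD u (- u); rewrite subrr delta0 in h.
by apply: (addrI (delta u)); rewrite -h subrr. Qed.

Lemma delta_fix l : theta l = l -> delta l = 0.
Proof.
move=> hl.
have pw : forall n, delta (l ^+ n.+1) = n.+1%:R * l ^+ n * delta l.
  elim=> [|n IH]; first by rewrite expr1 expr0 mulr1 mul1r.
  rewrite [l ^+ n.+2]exprSr dM IH rmorphXn hl exprSr; ring.
have := pw (#|F|.-1); rewrite (prednK (ltnW (finNzRing_gt1 F))) expf_card cardF0.
by rewrite !mul0r.
Qed.

Lemma Dop0 a : D a 0 = 0.
Proof. by rewrite /Dop rmorph0 mul0r delta0 addr0. Qed.
Lemma DopD a u v : D a (u + v) = D a u + D a v.
Proof. rewrite /Dop rmorphD mulrDl dD; ring. Qed.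
Lemma DopN a u : D a (- u) = - D a u.
Proof. rewrite /Dop rmorphN mulNr deltaN; ring. Qed.
Lemma Dop_fix a l u : theta l = l -> D a (l * u) = l * D a u.
Proof. move=> hl; rewrite /Dop rmorphM dM delta_fix // hl; ring. Qed.

Lemma iterD0 a n : iter n (D a) 0 = 0.
Proof. by elim: n => //= n ->; rewrite Dop0. Qed.
Lemma iterDD a n u v : iter n (D a) (u + v) = iter n (D a) u + iter n (D a) v.
Proof. by elim: n => //= n ->; rewrite DopD. Qed.
Lemma iterD_fix a n l u : theta l = l -> iter n (D a) (l * u) = l * iter n (D a) u.
Proof. by move=> hl; elim: n => //= n ->; rewrite Dop_fix. Qed.

Lemma opevalE (f : {poly F}) (a b : F) N : (size f <= N)%N ->
  ev f a b = \sum_(i < N) f`_i * iter i (D a) b.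
Proof.
move=> hN; rewrite /opeval (big_ord_widen N (fun i => f`_i * iter i (D a) b) hN).
rewrite big_mkcond; apply: eq_bigr => i _; case: ifP => // /negbT.
by rewrite -leqNgt => h; rewrite nth_default ?mul0r.
Qed.

Lemma opeval0 a b : ev 0 a b = 0.
Proof. by rewrite /opeval size_poly0 big_ord0. Qed.

Lemma opevalD f g a b : ev (f + g) a b = ev f a b + ev g a b.
Proof.
pose N := maxn (size f) (size g).
rewrite !(@opevalE _ _ _ N) ?size_polyD ?leq_maxl ?leq_maxr // -big_split.
by apply: eq_bigr => i _; rewrite coefD mulrDl.
Qed.

Lemma opevalN f a b : ev (- f) a b = - ev f a b.
Proof.
rewrite !(@opevalE _ _ _ (size f)) ?size_polyN // -sumrN.
by apply: eq_bigr => i _; rewrite coefN mulNr.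
Qed.

Lemma opevalZ c f a b : ev (c *: f) a b = c * ev f a b.
Proof.
rewrite !(@opevalE _ _ _ (size f)) ?size_scale_leq // mulr_sumr.
by apply: eq_bigr => i _; rewrite coefZ mulrA.
Qed.

Lemma opeval_sum I (r : seq I) (P : pred I) (Fp : I -> {poly F}) a b :
  ev (\sum_(i <- r | P i) Fp i) a b = \sum_(i <- r | P i) ev (Fp i) a b.
Proof.
exact: (big_morph (fun p => ev p a b) (fun p q => opevalD p q a b) (opeval0 a b)).
Qed.

Lemma Dop_sum a I (r : seq I) (P : pred I) (Fp : I -> F) :
  D a (\sum_(i <- r | P i) Fp i) = \sum_(i <- r | P i) D a (Fp i).
Proof. exact: (big_morph (D a) (DopD a) (Dop0 a)). Qed.

Lemma opeval_mulX g a b : ev (X g) a b = D a (ev g a b).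
Proof.
rewrite /skew_mulX opevalD.
rewrite (@opevalE _ _ _ (size g).+1); last first.
  by rewrite (leq_trans (size_polyMleq _ _)) // size_polyX size_map_poly addn2.
rewrite big_ord_recl coefMX eqxx mul0r add0r.
rewrite (@opevalE _ _ _ (size g)) ?size_poly //.
rewrite /opeval Dop_sum -big_split; apply: eq_bigr => i _ /=.
rewrite coefMX /= coef_map coef_poly ltn_ord /Dop rmorphM dM /=; ring.
Qed.

Lemma opeval_iterX n g a b : ev (iter n X g) a b = iter n (D a) (ev g a b).
Proof. by elim: n => //= n IH; rewrite opeval_mulX IH. Qed.

Lemma opeval_smul f g a b : ev (sm f g) a b = ev f a (ev g a b).
Proof.
rewrite /smul opeval_sum [RHS]/opeval; apply: eq_bigr => i _.
by rewrite opevalZ opeval_iterX.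
Qed.

Lemma opeval_at0 f a : ev f a 0 = 0.
Proof. by rewrite /opeval big1 // => i _; rewrite iterD0 mulr0. Qed.

Lemma opeval_addb f a u v : ev f a (u + v) = ev f a u + ev f a v.
Proof. by rewrite /opeval -big_split; apply: eq_bigr => i _; rewrite iterDD mulrDr. Qed.

Lemma opeval_fix f a l u : theta l = l -> ev f a (l * u) = l * ev f a u.
Proof.
move=> hl; rewrite /opeval mulr_sumr; apply: eq_bigr => i _.
by rewrite iterD_fix // mulrCA.
Qed.

Lemma opeval_sumb f a I (r : seq I) (P : pred I) (Fp : I -> F) :
  ev f a (\sum_(i <- r | P i) Fp i) = \sum_(i <- r | P i) ev f a (Fp i).
Proof. exact: (big_morph (ev f a) (opeval_addb f a) (opeval_at0 f a)). Qed.

Lemma smulE (f g : {poly F}) N : (size f <= N)%N ->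
  sm f g = \sum_(i < N) f`_i *: iter i X g.
Proof.
move=> hN; rewrite /smul (big_ord_widen N (fun i => f`_i *: iter i X g) hN).
rewrite big_mkcond; apply: eq_bigr => i _; case: ifP => // /negbT.
by rewrite -leqNgt => h; rewrite nth_default ?scale0r.
Qed.

Lemma smulD f h g : sm (f + h) g = sm f g + sm h g.
Proof.
pose N := maxn (size f) (size h).
rewrite !(@smulE _ _ N) ?size_polyD ?leq_maxl ?leq_maxr // -big_split.
by apply: eq_bigr => i _; rewrite coefD scalerDl.
Qed.

Lemma smul0 g : sm 0 g = 0.
Proof. by rewrite /smul size_poly0 big_ord0. Qed.

Lemma smul_cXn c d g : sm (c *: 'X^d) g = c *: iter d X g.
Proof.
rewrite (@smulE _ _ d.+1); last by rewrite (leq_trans (size_scale_leq _ _)) ?size_polyXn.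
rewrite big_ord_recr /= big1 ?add0r; last first.
  by move=> i _; rewrite coefZ coefXn (ltn_eqF (ltn_ord i)) mulr0 scale0r.
by rewrite coefZ coefXn eqxx mulr1.
Qed.

Lemma mulX_monic (g : {poly F}) : g \is monic -> X g \is monic /\ size (X g) = (size g).+1.
Proof.
move=> mg; have g0 : g != 0 := monic_neq0 mg.
have m1 : map_poly theta g * 'X \is monic by rewrite monicMr ?monicX ?map_monic.
have s1 : size (map_poly theta g * 'X) = (size g).+1.
  by rewrite size_mulX ?size_map_poly // map_poly_eq0.
have s2 : (size (\poly_(k < size g) (delta g`_k)%R) < size (map_poly theta g * 'X)%R)%N.
  by rewrite s1 ltnS size_poly.
rewrite /skew_mulX; split.
  by rewrite monicE lead_coefDl // -monicE.
by rewrite size_polyDl.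
Qed.

Lemma iterX_monic n g : g \is monic ->
  iter n X g \is monic /\ size (iter n X g) = (size g + n)%N.
Proof.
move=> mg; elim: n => [|n [IH1 IH2]] /=; first by rewrite addn0.
by have [-> ->] := mulX_monic _ IH1; rewrite IH2 addnS.
Qed.

Lemma rdiv_exists (G : {poly F}) : G \is monic -> forall P : {poly F},
  exists Q (r : {poly F}), (size r < size G)%N /\ P = sm Q G + r.
Proof.
move=> mG P; have [n le] := ubnP (size P); elim: n P le => // n IH P hP.
case: (ltnP (size P) (size G)) => hlt.
  by exists 0, P; rewrite smul0 add0r.
have G0 : G != 0 := monic_neq0 mG.
have P0 : P != 0.
  by apply/eqP=> P0; move: hlt; rewrite P0 size_poly0 leqn0 size_poly_eq0 (negbTE G0).
pose d := (size P - size G)%N; pose c := lead_coef P.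
have [mM sM] := iterX_monic d _ mG.
have sM' : size (iter d X G) = size P by rewrite sM subnKC.
pose P' := P - c *: iter d X G.
have sP0 : (0 < size P)%N by rewrite size_poly_gt0.
have l1 : (iter d X G)`_(size P).-1 = 1 by rewrite -sM'; exact: (eqP mM).
have hP1 : (size P' <= (size P).-1)%N.
  apply/leq_sizeP => i hi.
  rewrite /P' coefB coefZ; case: (ltngtP i (size P).-1) => hi'.
  - by move: hi; rewrite leqNgt hi'.
  - have hi2 : (size P <= i)%N by rewrite -(prednK sP0); exact: hi'.
    have hi3 : (size (iter d X G) <= i)%N by rewrite sM'.
    by rewrite (nth_default 0 hi2) (nth_default 0 hi3) mulr0 subrr.
  - by rewrite hi' l1 mulr1 /c /lead_coef subrr.
have hP' : (size P' < n)%N 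
  by apply: (leq_ltn_trans hP1); rewrite -ltnS prednK.
have [Q [r [hr eP']]] := IH P' hP'.
exists (Q + c *: 'X^d), r; split => //.
rewrite smulD smul_cXn addrAC -eP' /P'; by rewrite subrK.
Qed.

End S.

Theorem theorem1
  (F : finFieldType) (theta : {rmorphism F -> F}) (delta : F -> F)
  (delta_add : forall u v : F, delta (u + v) = delta u + delta v)
  (delta_mul : forall u v : F, delta (u * v) = delta u * v + theta u * delta v)
  (s l k : nat) (hs : (0 < s)%N)
  (nn : 'I_l -> nat) (hnn : forall i, (0 < nn i)%N)
  (xi : 'I_l -> F)
  (xi_nontriv : forall i, ~ skew_conj theta delta 0 (xi i))
  (xi_dist : forall i i', i != i' -> ~ skew_conj theta delta (xi i) (xi i'))
  (beta : 'I_s -> forall i : 'I_l, 'rV[F]_(nn i))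
  (beta_indep : forall j i, fq_indep theta (fun c => beta j i ord0 c) setT)
  (f : 'I_s -> {poly F}) (hf : forall j, (size (f j) <= k)%N)
  (e : 'I_s -> forall i : 'I_l, 'rV[F]_(nn i))
  (t : nat) (ht : sumrank_wt theta e = t)
  (* an error decomposition e_j^(i) = a^(i) B_j^(i) *)
  (tt : 'I_l -> nat)
  (htt : forall i, tt i = rkq theta (fun p : 'I_s * 'I_(nn i) => e p.1 i ord0 p.2))
  (a : forall i : 'I_l, 'rV[F]_(tt i))
  (a_indep : forall i, fq_indep theta (fun c => a i ord0 c) setT)
  (B : 'I_s -> forall i : 'I_l, 'M[F]_(tt i, nn i))
  (B_Fq : forall j i r c, theta (B j i r c) = B j i r c)
  (B_rank : forall i,
     \rank (@mxrow F s (fun _ : 'I_s => nn i) (tt i) (fun j => B j i)) = tt i)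
  (e_dec : forall j i, e j i = a i *m B j i)
  (* error-span polynomial *)
  (sigma : {poly F})
  (hsigma : minimal_monic
     (fun g => forall i c, opeval theta delta g (xi i) (a i ord0 c) = 0) sigma)
  (* minimal skew polynomials *)
  (G : 'I_s -> {poly F})
  (hG : forall j, minimal_monic
     (fun g => forall i c, opeval theta delta g (xi i) (beta j i ord0 c) = 0) (G j))
  (* interpolation polynomials of y = c + e *)
  (R : 'I_s -> {poly F})
  (R_deg : forall j, (size (R j) <= \sum_(i < l) nn i)%N)
  (R_int : forall j i, bev theta delta xi (R j) (beta j) i
                     = bev theta delta xi (f j) (beta j) i + e j i) :
  forall j : 'I_s,
    congr_r theta delta (smul theta delta sigma (R j))
                        (smul theta delta sigma (f j)) (G j).
Proof.
move=> j.
have mG := (hG j).1.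
have [Q1 [r1 [hr1 e1]]] := @rdiv_exists F theta delta _ mG (smul theta delta sigma (R j)).
have [Q2 [r2 [hr2 e2]]] := @rdiv_exists F theta delta _ mG (smul theta delta sigma (f j)).
suff r12 : r1 = r2.
  by exists r1; split; split => //; [exists Q1 | exists Q2; rewrite r12].
apply/eqP; rewrite -subr_eq0; apply/negPn/negP => hne.
have van : forall i c, opeval theta delta (r1 - r2) (xi i) (beta j i ord0 c) = 0.
  move=> i c.
  have -> : r1 = smul theta delta sigma (R j) - smul theta delta Q1 (G j)
    by rewrite e1 addrC addKr.
  have -> : r2 = smul theta delta sigma (f j) - smul theta delta Q2 (G j)
    by rewrite e2 addrC addKr.
  have hGb := (hG j).2.1 i c.
  rewrite !opevalD !opevalN !opevalD !opevalN !(opeval_smul delta_add delta_mul).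
  rewrite hGb !(opeval_at0 delta_add) oppr0 !addr0.
  have := congr1 (fun M : 'M[F]_(1, nn i) => M ord0 c) (R_int j i); rewrite /bev !mxE => ->.
  rewrite (opeval_addb delta_add) addrAC subrr add0r e_dec mxE.
  rewrite (opeval_sumb delta_add) big1 // => r _.
  by rewrite mulrC (opeval_fix delta_mul) ?B_Fq // (hsigma.2.1 i r) mulr0.
have := (hG j).2.2 _ hne van.
rewrite leqNgt; move/negP; apply.
by apply: (leq_ltn_trans (size_polyD _ _)); rewrite size_polyN gtn_max hr1 hr2.
Qed.
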